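(* Let $\mathbb{F}\in\{\mathbb{R},\mathbb{C}\}$ and $M>N$. Suppose $\Phi=\{\varphi_i\}_{i=1}^M$ is a Parseval frame for $\mathbb{F}^N$ and $\Psi=\{\psi_i\}_{i=1}^M$ is a Naimark complement of $\Phi$ (a Parseval frame for $\mathbb{F}^{M-N}$). Let $K\subseteq[M]$ with $|K|=k\leq N$ and $K^c=[M]\setminus K$. If $k\le M-N$, then for $i=1,\dots,M-N$, $$\sigma_i(\Psi_{K^c})=\begin{cases}1 & \text{if } 1\leq i\leq M-N-k,\\ \sigma_j(\Phi_K) & \text{if } i=M-N-k+j,\ 1\le j\le k.\end{cases}$$ If $k>M-N$, then $\sigma_i(\Phi_K)=1$ for $i=1,\dots,k-(M-N)$, and $\sigma_i(\Psi_{K^c})=\sigma_{i+k-(M-N)}(\Phi_K)$ for $i=1,\dots,M-N$.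
   Context: A Parseval frame for $\mathbb{F}^N$ is a family $\{\varphi_i\}_{i=1}^M\subseteq\mathbb{F}^N$ whose $N\times M$ matrix $\Phi$ (columns $\varphi_i$) satisfies $\Phi\Phi^*=I$. A Naimark complement of $\Phi$ is any $\Psi=\{\psi_i\}_{i=1}^M\subseteq\mathbb{F}^{M-N}$ with $\Psi^*\Psi=I-\Phi^*\Phi$. For $K\subseteq[M]$, $\Phi_K$ is the submatrix of columns indexed by $K$. For a matrix $F$ of size $n\times m$, $\sigma_1(F)\ge\sigma_2(F)\ge\dots\ge\sigma_{\min\{n,m\}}(F)$ denote its singular values in decreasing order. *)

(* Defs.v *)
(* Field F is modelled by an arbitrary numClosedFieldType C
   (e.g. algC, or complex R for R : rcfType); the real case F = R is the
   sub-case where all entries are real (see the `realF` flag in the theorem). *)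
From HB Require Import structures.
From mathcomp Require Import all_boot all_order all_algebra.
Set Implicit Arguments. Unset Strict Implicit. Unset Printing Implicit Defensive.
Import Order.TTheory GRing.Theory Num.Theory.
Local Open Scope ring_scope.

Section SV.
Variable C : numClosedFieldType.

Definition adjmx (m n : nat) (A : 'M[C]_(m, n)) : 'M[C]_(n, m) :=
  (map_mx (fun z => z^*) A)^T.

Lemma eigs_ex (n : nat) (A : 'M[C]_n) :
  exists s : seq C, char_poly A == \prod_(x <- s) ('X - x%:P).
Proof.
have [s Hs] := closed_field_poly_normal (char_poly A).
exists s; apply/eqP; rewrite {1}Hs.
by have /monicP -> := char_poly_monic A; rewrite scale1r.
Qed.

Definition eigs (n : nat) (A : 'M[C]_n) : seq C := xchoose (eigs_ex A).

Definition sing_vals (n m : nat) (F : 'M[C]_(n, m)) : seq C :=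
  take (minn n m) (map sqrtC (sort (fun x y => y <= x) (eigs (adjmx F *m F)))).

(* sigma F i = sigma_i(F), 1-indexed (meaningful for 1 <= i <= min n m) *)
Definition sigma (n m : nat) (F : 'M[C]_(n, m)) (i : nat) : C :=
  nth 0 (sing_vals F) i.-1.

Definition colsK (n M : nat) (K : {set 'I_M}) (F : 'M[C]_(n, M)) : 'M[C]_(n, #|K|) :=
  colsub (fun j : 'I_#|K| => enum_val j) F.

Definition parseval (N M : nat) (Phi : 'M[C]_(N, M)) : Prop :=
  Phi *m adjmx Phi = 1%:M.

Definition naimark_complement (N M : nat) (Phi : 'M[C]_(N, M))
  (Psi : 'M[C]_(M - N, M)) : Prop :=
  adjmx Psi *m Psi = 1%:M - adjmx Phi *m Phi.

End SV.

(* Main.v *)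
Require Import Defs.
From HB Require Import structures.
From mathcomp Require Import all_boot all_order all_algebra.
From mathcomp Require Import zify ring.
Set Implicit Arguments. Unset Strict Implicit. Unset Printing Implicit Defensive.
Import Order.TTheory GRing.Theory Num.Theory.
Local Open Scope ring_scope.

Section Helpers.
Variable C : numClosedFieldType.
Local Notation ge := (fun x y : C => y <= x).
Definition in01 (x : C) := (0 <= x) && (x <= 1).

Lemma ge_trans : transitive ge.
Proof. by move=> y x z h1 h2; apply: le_trans h2 h1. Qed.

Lemma in01_real x : in01 x -> x \is Num.real.
Proof. by case/andP=> h _; apply: ger0_real. Qed.

Lemma sort_ge_eq (s t : seq C) : all in01 s -> perm_eq s t -> sorted ge t ->
  sort ge s = t.
Proof.
move=> As st St.
have -> : sort ge s = sort ge t.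
  apply/perm_sort_inP => //.
  - move=> x y xs ys; rewrite /=.
    have rx := in01_real (allP As _ xs); have ry := in01_real (allP As _ ys).
    by rewrite orbC; apply: real_leVge.
  - by move=> x y z _ _ _; apply: ge_trans.
  - by move=> x y _ _ /andP[h1 h2]; apply/le_anti; rewrite h1 h2.
exact: sorted_sort ge_trans _ St.
Qed.

Lemma pairwise_nseq (T : Type) (r : rel T) a x : r x x -> pairwise r (nseq a x).
Proof. by move=> rxx; elim: a => //= a ->; rewrite andbT all_nseq rxx orbT. Qed.

Lemma sorted_block a b L : all in01 L ->
  sorted ge (nseq a 1 ++ sort ge L ++ nseq b 0).
Proof.
move=> AL.
have AsL : all in01 (sort ge L) by rewrite all_sort.
rewrite (sorted_pairwise ge_trans) !pairwise_cat !allrel_catr.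
rewrite !pairwise_nseq //= -(sorted_pairwise ge_trans).
rewrite (sort_sorted_in (P := in01)) //; last first.
  move=> x y px py; rewrite /= orbC; by apply: real_leVge; apply: in01_real.
rewrite !andbT; apply/andP; split; [apply/andP; split|].
- by apply/allrelP => x y /nseqP[-> _] /(allP AsL) /andP[].
- by apply/allrelP => x y /nseqP[-> _] /nseqP[-> _]; rewrite ler01.
- by apply/allrelP => x y /(allP AsL) /andP[] ? _ /nseqP[-> _].
Qed.

Lemma nth_Z (mc k N : nat) (sL : seq C) t : size sL = k ->
  nth 0 (nseq mc 1 ++ sL ++ nseq (N - k) 0) t =
  if (t < mc)%N then 1 else if (t - mc < k)%N then nth 0 sL (t - mc) else 0.
Proof.
move=> sz; rewrite nth_cat size_nseq; case: ifP => h.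
  by rewrite nth_nseq h.
rewrite nth_cat sz; case: ifP => // _; by rewrite nth_nseq if_same.
Qed.

Lemma final_lists (M N mc k : nat) (sc sL : seq C) :
  (N < M)%N -> (k <= N)%N -> mc = (M - k)%N -> size sc = mc -> size sL = k ->
  nseq N 1 ++ sc = nseq mc 1 ++ sL ++ nseq (N - k) 0 ->
  ((k <= M - N)%N ->
     forall i : nat, (1 <= i <= M - N)%N ->
       nth 0 (take (minn (M - N) mc) (map sqrtC sc)) i.-1 =
         (if (i <= M - N - k)%N then 1 else
            nth 0 (take (minn N k) (map sqrtC sL)) (i - (M - N - k)).-1))
  /\
  ((M - N < k)%N ->
     (forall i : nat, (1 <= i <= k - (M - N))%N ->
        nth 0 (take (minn N k) (map sqrtC sL)) i.-1 = 1)
     /\ (forall i : nat, (1 <= i <= M - N)%N ->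
        nth 0 (take (minn (M - N) mc) (map sqrtC sc)) i.-1 =
        nth 0 (take (minn N k) (map sqrtC sL)) (i + (k - (M - N))).-1)).
Proof.
move=> NM kN emc szc szL EQ.
have Hc t : (t < mc)%N -> nth 0 sc t = if (N + t < mc)%N then 1 else
   if (N + t - mc < k)%N then nth 0 sL (N + t - mc) else 0.
  move=> tmc; rewrite -(nth_Z mc N (N + t) szL) -EQ nth_cat size_nseq.
  by rewrite ltnNge leq_addr /= addKn.
have HL t : (t < k)%N -> nth 0 sL t = nth 0 (nseq N 1 ++ sc) (mc + t).
  move=> tk; rewrite EQ nth_Z // ltnNge leq_addr /= addKn tk //.
have TL t : (t < k)%N -> nth 0 (take (minn N k) (map sqrtC sL)) t = sqrtC (nth 0 sL t).
  move=> tk; rewrite nth_take; last by lia.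
  by rewrite (nth_map 0) // szL.
have TC t : (t < M - N)%N -> nth 0 (take (minn (M - N) mc) (map sqrtC sc)) t = sqrtC (nth 0 sc t).
  move=> tk; rewrite nth_take; last by lia.
  by rewrite (nth_map 0) // szc; lia.
split.
  move=> kMN i /andP[i1 iM]; rewrite TC; last by lia.
  rewrite Hc; last by lia.
  have [h1|h1] := boolP (i <= M - N - k)%N.
    by rewrite ifT ?h1 ?sqrtC1 //; lia.
  rewrite ifF; last by lia.
  rewrite ifT; last by lia.
  rewrite TL; last by lia.
  congr (sqrtC (nth 0 sL _)); lia.
move=> MNk; split.
  move=> i /andP[i1 iM]; rewrite TL; last by lia.
  rewrite HL; last by lia.
  by rewrite nth_cat size_nseq ifT ?nth_nseq ?ifT ?sqrtC1 //; lia.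
move=> i /andP[i1 iM]; rewrite TC; last by lia.
rewrite Hc; last by lia.
rewrite ifF; last by lia.
rewrite ifT; last by lia.
rewrite TL; last by lia.
congr (sqrtC (nth 0 sL _)); lia.
Qed.
Lemma eigsP n (A : 'M[C]_n) : char_poly A = \prod_(x <- eigs A) ('X - x%:P).
Proof. exact/eqP/(xchooseP (eigs_ex A)). Qed.

Lemma size_eigs n (A : 'M[C]_n) : size (eigs A) = n.
Proof.
have := size_char_poly A; rewrite eigsP size_prod_XsubC; by case.
Qed.

Lemma eigs_perm n (A : 'M[C]_n) s :
  char_poly A = \prod_(x <- s) ('X - x%:P) -> perm_eq (eigs A) s.
Proof. by rewrite eigsP => /prod_XsubC_eq. Qed.

Lemma prod_nseq0 (s : seq C) m :
  \prod_(x <- s ++ nseq m 0) ('X - x%:P) = \prod_(x <- s) ('X - x%:P) * 'X^m.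
Proof.
rewrite big_cat /=; congr (_ * _).
elim: m => [|m IH]; first by rewrite big_nil expr0.
by rewrite /= big_cons IH polyC0 subr0 exprS.
Qed.

Lemma sylvester_poly n m (A : 'M[C]_(n, m)) (B : 'M[C]_(m, n)) :
  char_poly (A *m B) * 'X^m = char_poly (B *m A) * 'X^n.
Proof.
pose a := map_mx polyC A; pose b := map_mx polyC B.
pose D := \det (block_mx ('X%:M : 'M_n) a b (1%:M : 'M_m)).
have e1 : block_mx (1%:M : 'M_n) (- a) 0 ('X%:M : 'M_m) *m block_mx ('X%:M : 'M_n) a b 1%:M
         = block_mx (char_poly_mx (A *m B)) 0 ('X *: b) ('X%:M).
  rewrite mulmx_block /char_poly_mx map_mxM -/a -/b !mul1mx !mul0mx !add0r.
  by rewrite !mulmx1 mulNmx addrN mul_scalar_mx.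
have e2 : block_mx (1%:M : 'M_n) 0 (- b) ('X%:M : 'M_m) *m block_mx ('X%:M : 'M_n) a b 1%:M
         = block_mx ('X%:M) a 0 (char_poly_mx (B *m A)).
  rewrite mulmx_block /char_poly_mx map_mxM -/a -/b !mul1mx !mul0mx !addr0.
  by rewrite !mulmx1 !mulNmx mul_mx_scalar mul_scalar_mx addNr addrC.
have d1 := congr1 determinant e1; have d2 := congr1 determinant e2.
rewrite det_mulmx det_ublock det1 mul1r det_lblock det_scalar -/D in d1.
rewrite det_mulmx det_lblock det1 mul1r det_ublock !det_scalar -/D in d2.
by rewrite /char_poly -d1 d2 mulrC.
Qed.

Lemma sylvester n m (A : 'M[C]_(n, m)) (B : 'M[C]_(m, n)) :
  perm_eq (eigs (A *m B) ++ nseq m 0) (eigs (B *m A) ++ nseq n 0).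
Proof.
apply: prod_XsubC_eq; rewrite !prod_nseq0 -!eigsP; exact: sylvester_poly.
Qed.

Lemma prod_1m (s : seq C) :
  \prod_(x <- map (fun x => 1 - x) s) ('X - x%:P) =
  (-1) ^+ size s * \prod_(x <- s) ((1 - 'X) - x%:P).
Proof.
elim: s => [|y s IH]; first by rewrite !big_nil expr0 mulr1.
rewrite /= !big_cons IH exprS polyCB polyC1; ring.
Qed.

Lemma eigs_1m n (A : 'M[C]_n) :
  perm_eq (eigs (1%:M - A)) (map (fun x => 1 - x) (eigs A)).
Proof.
apply: eigs_perm; rewrite prod_1m size_eigs /char_poly.
have -> : char_poly_mx (1%:M - A) =
          - map_mx (comp_poly (1 - 'X)) (char_poly_mx A).
  apply/matrixP => i j; rewrite !mxE; case: eqP => _ /=.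
    rewrite mulr1n comp_polyB comp_polyX comp_polyC polyCB polyC1; ring.
  rewrite mulr0n comp_polyB comp_polyC comp_poly0 polyCB polyC0; ring.
rewrite -scaleN1r detZ det_map_mx -/(char_poly A) eigsP.
by rewrite rmorph_prod /=; congr (_ * _); apply: eq_bigr => x _;
  rewrite comp_polyB comp_polyX comp_polyC.
Qed.
Lemma adjmxM m n p (A : 'M[C]_(m, n)) (B : 'M[C]_(n, p)) :
  adjmx (A *m B) = adjmx B *m adjmx A.
Proof.
apply/matrixP => i j; rewrite !mxE rmorph_sum; apply: eq_bigr => r _.
by rewrite !mxE rmorphM mulrC.
Qed.

Lemma adjmxK m n (A : 'M[C]_(m, n)) : adjmx (adjmx A) = A.
Proof. by apply/matrixP => i j; rewrite !mxE conjCK. Qed.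

Lemma adjmxD m n (A B : 'M[C]_(m, n)) : adjmx (A + B) = adjmx A + adjmx B.
Proof. by apply/matrixP => i j; rewrite !mxE rmorphD. Qed.

Definition nrm n (w : 'rV[C]_n) := (w *m adjmx w) 0 0.

Lemma nrmE n (w : 'rV[C]_n) : nrm w = \sum_j `|w 0 j| ^+ 2.
Proof. by rewrite /nrm mxE; apply: eq_bigr => j _; rewrite !mxE normCK. Qed.

Lemma nrm_ge0 n (w : 'rV[C]_n) : 0 <= nrm w.
Proof. by rewrite nrmE sumr_ge0 // => j _; rewrite exprn_ge0. Qed.

Lemma nrm_gt0 n (w : 'rV[C]_n) : w != 0 -> 0 < nrm w.
Proof.
move=> wn0; rewrite lt_def nrm_ge0 andbT; apply: contra wn0 => /eqP h.
apply/eqP/matrixP => i j; rewrite (ord1 i) mxE.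
have := psumr_eq0P (P := predT) (fun j _ => exprn_ge0 2 (normr_ge0 (w 0 j))).
rewrite -nrmE => /(_ h j isT) /eqP; rewrite sqrf_eq0 normr_eq0 => /eqP //.
Qed.

Lemma eigs_in01 k p q (P : 'M[C]_(p, k)) (Q : 'M[C]_(q, k)) :
  adjmx P *m P + adjmx Q *m Q = 1%:M -> all in01 (eigs (adjmx P *m P)).
Proof.
move=> H; apply/allP => x xin.
have : eigenvalue (adjmx P *m P) x by rewrite eigenvalue_root_char eigsP root_prod_XsubC.
case/eigenvalueP => v Hv vn0.
have key q' (R : 'M[C]_(q', k)) : (v *m (adjmx R *m R) *m adjmx v) 0 0 = nrm (v *m adjmx R).
  by rewrite /nrm adjmxM adjmxK !mulmxA.
have e1 : x * nrm v = nrm (v *m adjmx P).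
  by rewrite -key Hv -scalemxAl mxE.
have e2 : nrm v = nrm (v *m adjmx P) + nrm (v *m adjmx Q).
  have := congr1 (fun M => (v *m M *m adjmx v) 0 0) H => /=.
  rewrite mulmx1 mulmxDr mulmxDl mxE !key => h.
  by rewrite -[LHS]/((v *m adjmx v) 0 0) -h.
have gt := nrm_gt0 vn0.
apply/andP; split.
  by rewrite -(pmulr_lge0 _ gt) e1 nrm_ge0.
by rewrite -(ler_pM2r gt) mul1r e1 [X in _ <= X]e2 lerDl nrm_ge0.
Qed.
Lemma colsK_gram n M (K : {set 'I_M}) (F : 'M[C]_(n, M)) :
  adjmx (colsK K F) *m colsK K F =
  mxsub (fun j : 'I_#|K| => enum_val j) (fun j : 'I_#|K| => enum_val j) (adjmx F *m F).
Proof.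
apply/matrixP => i j; rewrite !mxE; apply: eq_bigr => r _; by rewrite !mxE.
Qed.

Lemma gram_sum1 N M (K : {set 'I_M}) (Phi : 'M[C]_(N, M)) (Psi : 'M[C]_(M - N, M)) :
  naimark_complement Phi Psi ->
  adjmx (colsK K Phi) *m colsK K Phi + adjmx (colsK K Psi) *m colsK K Psi = 1%:M.
Proof.
rewrite /naimark_complement !colsK_gram => H.
have -> : forall (X Y : 'M[C]_M), mxsub (fun j : 'I_#|K| => enum_val j) (fun j : 'I_#|K| => enum_val j) X
   + mxsub (fun j : 'I_#|K| => enum_val j) (fun j : 'I_#|K| => enum_val j) Y
   = mxsub (fun j : 'I_#|K| => enum_val j) (fun j : 'I_#|K| => enum_val j) (X + Y).
  by move=> X Y; apply/matrixP => i j; rewrite !mxE.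
rewrite H addrC subrK; apply/matrixP => i j; rewrite !mxE (inj_eq enum_val_inj) //.
Qed.

Lemma sum_enum (M : nat) (K : {set 'I_M}) (G : 'I_M -> C) :
  \sum_(t < #|K|) G (enum_val t) = \sum_(x in K) G x.
Proof. by rewrite (big_enum_val (A := mem K)). Qed.

Lemma split_gram N M (K : {set 'I_M}) (F : 'M[C]_(N, M)) :
  colsK K F *m adjmx (colsK K F) + colsK (~: K) F *m adjmx (colsK (~: K) F)
  = F *m adjmx F.
Proof.
apply/matrixP => a b; rewrite !mxE.
have E (A : {set 'I_M}) : \sum_(t < #|A|) colsK A F a t * adjmx (colsK A F) t b
   = \sum_(x in A) F a x * (F b x)^*.
  by rewrite -(sum_enum A (fun x => F a x * (F b x)^*)); apply: eq_bigr => t _; rewrite !mxE.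
rewrite !E [in RHS](bigID (mem K)) /=; congr (_ + _).
  by apply: eq_big => [x|x _]; rewrite ?mxE.
by apply: eq_big => [x|x _]; rewrite ?mxE ?in_setC.
Qed.
End Helpers.

Theorem proposition13 (C : numClosedFieldType) (realF : bool) (N M : nat)
  (Phi : 'M[C]_(N, M)) (Psi : 'M[C]_(M - N, M)) (K : {set 'I_M}) :
  (N < M)%N ->
  (realF -> (forall i j, Phi i j \is Num.real) /\ (forall i j, Psi i j \is Num.real)) ->
  parseval Phi ->
  naimark_complement Phi Psi ->
  (#|K| <= N)%N ->
  ((#|K| <= M - N)%N ->
     forall i : nat, (1 <= i <= M - N)%N ->
       sigma (colsK (~: K) Psi) i =
         (if (i <= M - N - #|K|)%N then 1 else sigma (colsK K Phi) (i - (M - N - #|K|))))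
  /\
  ((M - N < #|K|)%N ->
     (forall i : nat, (1 <= i <= #|K| - (M - N))%N -> sigma (colsK K Phi) i = 1)
     /\ (forall i : nat, (1 <= i <= M - N)%N ->
           sigma (colsK (~: K) Psi) i = sigma (colsK K Phi) (i + (#|K| - (M - N))))).
Proof.
move=> NM _ Hpar Hnai kN.
set k := #|K|; set mc := #|~: K|.
set P := colsK K Phi; set Q := colsK K Psi.
set R := colsK (~: K) Psi; set Pc := colsK (~: K) Phi.
have emc : mc = (M - k)%N by have := cardsC K; rewrite card_ord -/k -/mc; lia.
set c := eigs (adjmx R *m R); set L := eigs (adjmx P *m P).
set f := fun x : C => 1 - x.
have HPQ : adjmx P *m P + adjmx Q *m Q = 1%:M by apply: gram_sum1.
have HPcR : adjmx Pc *m Pc + adjmx R *m R = 1%:M by apply: gram_sum1.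
have AL : all (@in01 C) L by apply: eigs_in01 HPQ.
have Ac : all (@in01 C) c by apply: (eigs_in01 (Q := Pc)); rewrite addrC.
have eR : adjmx R *m R = 1%:M - adjmx Pc *m Pc by rewrite -HPcR addrC addKr.
have ePc : Pc *m adjmx Pc = 1%:M - P *m adjmx P.
  by rewrite -Hpar -(split_gram K Phi) -/P -/Pc addrC addKr.
have h1 : perm_eq c (map f (eigs (adjmx Pc *m Pc))) by rewrite /c eR; apply: eigs_1m.
have h2 := sylvester (adjmx Pc) Pc.
have h3 : perm_eq (eigs (Pc *m adjmx Pc)) (map f (eigs (P *m adjmx P))) by rewrite ePc; apply: eigs_1m.
have h4 := sylvester P (adjmx P).
have h5 : perm_eq (eigs (P *m adjmx P)) (L ++ nseq (N - k) 0).
  by rewrite -(perm_cat2r (nseq k 0)) -catA -nseqD subnK.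
have ff : forall s, map f (map f s) = s.
  by move=> s; rewrite -map_comp map_id_in // => x _; rewrite /f /= opprB addrC subrK.
have Hperm : perm_eq (c ++ nseq N 1) (nseq mc 1 ++ L ++ nseq (N - k) 0).
  have e0 : nseq N (1 : C) = map f (nseq N 0) by rewrite map_nseq /f subr0.
  apply: (perm_trans (perm_cat h1 (perm_refl _))).
  rewrite e0 -map_cat; apply: (perm_trans (perm_map f h2)).
  rewrite map_cat map_nseq /f subr0 -/f.
  apply: (perm_trans (perm_cat (perm_map f h3) (perm_refl _))).
  by rewrite ff perm_catC; apply: perm_cat.
have in1 : in01 (1 : C) by rewrite /in01 ler01 lexx.
have Acat : all (@in01 C) (c ++ nseq N 1) by rewrite all_cat Ac all_nseq in1 orbT.
have EQ : nseq N 1 ++ sort (fun x y : C => y <= x) c =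
          nseq mc 1 ++ sort (fun x y : C => y <= x) L ++ nseq (N - k) 0.
  rewrite -(sort_ge_eq Acat (t := nseq N 1 ++ sort (fun x y : C => y <= x) c)).
  - apply: sort_ge_eq => //; last exact: sorted_block.
    apply: perm_trans Hperm _; rewrite perm_cat2l perm_cat2r perm_sym perm_sort //.
  - by rewrite perm_catC perm_cat2l perm_sym perm_sort.
  - by have := sorted_block N 0 Ac; rewrite cats0.
have szc : size (sort (fun x y : C => y <= x) c) = mc by rewrite size_sort size_eigs.
have szL : size (sort (fun x y : C => y <= x) L) = k by rewrite size_sort size_eigs.
have := final_lists NM kN emc szc szL EQ.
by rewrite /sigma /sing_vals -/c -/L.
Qed.
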